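(* Let $\mathcal{U}$ be a UEC-representative. Then the partially directed graph $\mathtt{init\_CPDAG}(\mathcal{U})$ is a CPDAG, i.e. it equals the CPDAG of the Markov equivalence class of some DAG.
   Context: For a DAG $\mathcal{D}$, a trek is a path with no repeated vertices and no collider; the unconditional dependence graph $\mathcal{U}^\mathcal{D}$ has an edge between distinct $v,w$ iff there is a trek between them; a UEC-representative is an undirected graph equal to $\mathcal{U}^\mathcal{D}$ for some DAG on the same vertex set. $\mathtt{init\_CPDAG}(\mathcal{U})$ is the partially directed graph obtained from $\mathcal{U}$ as follows: for every induced path $v - v' - v''$ in $\mathcal{U}$ ($v,v''$ nonadjacent) orient its edges as $v\to v'\leftarrow v''$; thus an edge $\{a,b\}$ receives orientation $a\to b$ iff some neighbor of $b$ other than $a$ is nonadjacent to $a$. Edges receiving both orientations (bidirected) are removed; edges receiving exactly one orientation become directed accordingly; edges receiving none stay undirected. The CPDAG of a DAG $\mathcal{D}$ is the partially directed graph with the skeleton of $\mathcal{D}$ in which $i\to j$ is directed iff $i\to j$ is an edge of every DAG Markov equivalent to $\mathcal{D}$, all other edges being undirected (Markov equivalent: same skeleton and v-structures). *)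

(* Defs.v *)
From mathcomp Require Import all_boot.
Set Implicit Arguments. Unset Strict Implicit. Unset Printing Implicit Defensive.

(* Graphs on a finite vertex set T.  A directed graph is d : rel T
   (d x y means x -> y).  An undirected graph is u : rel T (symmetric). *)

(* A DAG: no directed cycle (this also excludes self-loops). *)
Definition is_dag (T : finType) (d : rel T) : Prop :=
  forall (x : T) (p : seq T), path d x p -> last x p = x -> p = [::].

Definition adj (T : finType) (d : rel T) (x y : T) : bool := d x y || d y x.

Definition no_collider (T : finType) (d : rel T) (x0 : T) (l : seq T) : Prop :=
  forall i, i.+2 < size l ->
    ~~ (d (nth x0 l i) (nth x0 l i.+1) && d (nth x0 l i.+2) (nth x0 l i.+1)).

Definition trek (T : finType) (d : rel T) (v w : T) : Prop :=
  exists s : seq T,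
    [/\ path (adj d) v s, last v s = w, uniq (v :: s) & no_collider d v (v :: s)].

Definition udg (T : finType) (d : rel T) (v w : T) : Prop :=
  v != w /\ trek d v w.

Definition UEC_representative (T : finType) (u : rel T) : Prop :=
  exists d : rel T, is_dag d /\ forall v w, u v w <-> udg d v w.

Record pdg (T : finType) := PDG { pdg_dir : T -> T -> Prop ; pdg_und : T -> T -> Prop }.

Definition pdg_eq (T : finType) (G H : pdg T) : Prop :=
  (forall x y, pdg_dir G x y <-> pdg_dir H x y) /\
  (forall x y, pdg_und G x y <-> pdg_und H x y).

Definition orient (T : finType) (u : rel T) (a b : T) : Prop :=
  u a b /\ exists c, [/\ c != a, u b c & ~~ u a c].

Definition init_CPDAG (T : finType) (u : rel T) : pdg T :=
  PDG (fun a b => orient u a b /\ ~ orient u b a)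
      (fun a b => [/\ u a b, ~ orient u a b & ~ orient u b a]).

Definition vstruct (T : finType) (d : rel T) (a b c : T) : bool :=
  [&& d a b, d c b, a != c & ~~ adj d a c].

Definition markov_equiv (T : finType) (d d' : rel T) : Prop :=
  (forall x y, adj d x y = adj d' x y) /\
  (forall a b c, vstruct d a b c = vstruct d' a b c).

Definition cpdag_dir (T : finType) (d : rel T) (i j : T) : Prop :=
  d i j /\ forall d' : rel T, is_dag d' -> markov_equiv d d' -> d' i j.

Definition CPDAG_of (T : finType) (d : rel T) : pdg T :=
  PDG (cpdag_dir d)
      (fun i j => [/\ adj d i j, ~ cpdag_dir d i j & ~ cpdag_dir d j i]).

(* Main.v *)
Require Import Defs.
From mathcomp Require Import all_boot zify.
Set Implicit Arguments. Unset Strict Implicit. Unset Printing Implicit Defensive.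

Lemma dag_notin (T : finType) (d : rel T) x p :
  is_dag d -> path d x p -> x \notin p.
Proof.
move=> Hd Hp; apply/negP=> Hx.
case/splitPr: Hx Hp => p1 p2; rewrite cat_path /= => /and3P [H1 H2 _].
have := Hd x (rcons p1 x); rewrite rcons_path H1 H2 last_rcons => /(_ isT erefl).
by case: p1 {H1 H2}.
Qed.

Lemma dag_uniq (T : finType) (d : rel T) x p :
  is_dag d -> path d x p -> uniq (x :: p).
Proof.
move=> Hd; elim: p x => [//|y p IH] x Hp.
rewrite cons_uniq (dag_notin Hd Hp) /=.
by apply: IH; case/andP: Hp.
Qed.

Lemma dag_2cyc (T : finType) (d : rel T) x y :
  is_dag d -> d x y -> d y x -> False.
Proof.
move=> Hd H1 H2; have := Hd x [:: y; x]; rewrite /= H1 H2 => /(_ isT erefl). by [].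
Qed.

Definition source (T : finType) (d : rel T) (s : T) := [forall z, ~~ d z s].

Lemma src_exists (T : finType) (d : rel T) v :
  is_dag d -> exists s, connect d s v /\ source d s.
Proof.
move=> Hd.
suff: forall n v, #|[set y | connect d y v]| <= n -> exists s, connect d s v /\ source d s.
  by apply; apply: leqnn.
elim=> [|n IH] {}v Hn.
  have Hv : v \in [set y | connect d y v] by rewrite inE connect0.
  by rewrite leqn0 in Hn; rewrite (cards0_eq (eqP Hn)) inE in Hv.
case Hs: (source d v); first by exists v; rewrite connect0.
move/negbT: Hs; rewrite /source negb_forall => /existsP [z]; rewrite negbK => Hzv.
have [s [Hs1 Hs2]] : exists s, connect d s z /\ source d s.
  apply: IH; rewrite -ltnS; apply: leq_trans Hn.
  apply: proper_card; apply/properP; split.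
    apply/subsetP=> y; rewrite !inE => Hy; apply: connect_trans Hy (connect1 Hzv).
  exists v; rewrite !inE ?connect0 //.
  apply/negP=> /connectP [p Hp Hl].
  have := Hd v (rcons p v); rewrite rcons_path Hp -Hl Hzv last_rcons => /(_ isT erefl).
  by case: p {Hp Hl}.
exists s; split => //; exact: connect_trans Hs1 (connect1 Hzv).
Qed.

Lemma nocol_tail (T : finType) (d : rel T) x0 x l :
  no_collider d x0 (x :: l) -> no_collider d x0 l.
Proof. by move=> H i Hi; apply: (H i.+1). Qed.

Lemma trek_anc (T : finType) (d : rel T) s v x0 :
  path (adj d) v s -> no_collider d x0 (v :: s) ->
  exists t, [/\ connect d t v, connect d t (last v s) &
     (t = v \/ exists z s', s = z :: s' /\ d z v)].
Proof.
elim: s v => [|y s IH] v /=; first by move=> _ _; exists v; split; [exact: connect0|exact: connect0|left].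
case/andP=> Hvy Hp Hnc.
have [t [Ht1 Ht2 Ht3]] := IH y Hp (nocol_tail Hnc).
case Hyv: (d y v).
  exists t; split => //; first exact: connect_trans Ht1 (connect1 Hyv).
  by right; exists y, s.
have Hvy' : d v y by move: Hvy; rewrite /adj Hyv orbF.
case: Ht3 => [Hty|[z [s' [Hs Hzy]]]].
  subst t; exists v; split; [exact: connect0| |by left].
  exact: connect_trans (connect1 Hvy') Ht2.
subst s; have := Hnc 0 isT; by rewrite /= Hvy' Hzy.
Qed.

Fixpoint nc (T : finType) (d : rel T) (l : seq T) : bool :=
  match l with
  | x :: ((y :: z :: _) as l') => ~~ (d x y && d z y) && nc d l'
  | _ => true
  end.

Lemma nc_nocol (T : finType) (d : rel T) x0 l : nc d l -> no_collider d x0 l.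
Proof.
elim: l => [|x l IH] Hn i Hi //.
case: l IH Hn Hi => [|y [|z l]] IH Hn Hi //.
case/andP: Hn => H1 H2.
case: i Hi => [|i] Hi //.
exact: (IH H2 i).
Qed.

Lemma nc_fwd (T : finType) (d : rel T) x l :
  is_dag d -> path d x l -> nc d (x :: l).
Proof.
move=> Hd; elim: l x => [|y l IH] x //= /andP [Hxy Hp].
case: l IH Hp => [|z l] IH Hp //.
apply/andP; split; last exact: IH y Hp. case/andP: Hp => Hyz _.
apply/negP=> /andP [_ Hzy]; exact: dag_2cyc Hd Hyz Hzy.
Qed.

Lemma nc_gen (T : finType) (d : rel T) q m x :
  is_dag d -> path (fun a b => d b a) x m -> path d (last x m) q -> nc d (x :: m ++ q).
Proof.
move=> Hd; elim: m x => [|y m IH] x /=; first by move=> _; apply: nc_fwd.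
case/andP=> Hyx Hp Hq.
have := IH y Hp Hq; case E: (m ++ q) => [|z l] //= ->; rewrite andbT.
apply/negP=> /andP [Hxy _]; exact: dag_2cyc Hd Hxy Hyx.
Qed.

Lemma last_rev_belast (T : Type) (x : T) p : last (last x p) (rev (belast x p)) = x.
Proof. by case: p => [|y p] //=; rewrite rev_cons last_rcons. Qed.

Lemma anc_trek (T : finType) (d : rel T) :
  is_dag d -> forall n t p q, size p + size q <= n -> path d t p -> path d t q ->
  trek d (last t p) (last t q).
Proof.
move=> Hd; elim=> [|n IH] t p q Hn Hp Hq.
  by case: p q Hn Hp Hq => [|? ?] [|? ?] // _ _ _; exists [::]; split => //; move=> i.
case Hh: (has (mem q) p).
  case/hasP: Hh => z Hzp Hzq.
  case/splitPr: Hzp Hp Hn => p1 p2; case/splitPr: Hzq Hq => q1 q2.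
  rewrite !cat_path !last_cat /= => /and3P [_ _ Hq2] /and3P [_ _ Hp2] Hn.
  apply: IH Hp2 Hq2; rewrite !size_cat /= in Hn; lia.
have Hu1 := dag_uniq Hd Hp; have Hu2 := dag_uniq Hd Hq.
set v := last t p.
exists (rev (belast t p) ++ q); split.
- rewrite cat_path; apply/andP; split.
    have := rev_path (adj d) t p; rewrite /v => ->.
    by apply: sub_path Hp => a b Hab; rewrite /adj Hab orbT.
  have E : last v (rev (belast t p)) = t.
    exact: last_rev_belast.
  rewrite E; by apply: sub_path Hq => a b Hab; rewrite /adj Hab.
- rewrite last_cat.
  by case: q {Hq Hh Hu2 Hn} => [|y q] //=; rewrite last_rev_belast.
- have -> : v :: (rev (belast t p) ++ q) = rev (t :: p) ++ q.
    by rewrite [t :: p]lastI rev_rcons.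
  rewrite cat_uniq rev_uniq Hu1 /=; case/andP: Hu2 => Htq Hq'; apply/andP; split; last exact: Hq'.
  apply/hasPn => x Hx; rewrite mem_rev inE; apply/negP=> /orP [/eqP Hxt|Hxp].
    by subst x; rewrite Hx in Htq.
  by move/negbT/hasPn: Hh => /(_ x Hxp); move/negP; apply.
- apply: nc_nocol; apply: nc_gen => //.
    by rewrite /v rev_path.
  by rewrite last_rev_belast.
Qed.

Lemma trek_iff (T : finType) (d : rel T) v w : is_dag d ->
  trek d v w <-> exists s, [/\ connect d s v, connect d s w & source d s].
Proof.
move=> Hd; split.
  case=> s [Hp Hl _ Hnc].
  have [t [Ht1 Ht2 _]] := trek_anc Hp Hnc.
  have [s0 [Hs1 Hs2]] := src_exists t Hd.
  exists s0; split => //; [exact: connect_trans Hs1 Ht1|rewrite -Hl; exact: connect_trans Hs1 Ht2].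
case=> s [/connectP [p Hp ->] /connectP [q Hq ->] _].
exact: (anc_trek Hd (leqnn _) Hp Hq).
Qed.

Definition Aset (T : finType) (d : rel T) (v : T) : {set T} :=
  [set s | connect d s v && source d s].

Lemma Aset_src (T : finType) (d : rel T) v s :
  s \in Aset d v -> Aset d s = [set s].
Proof.
rewrite inE => /andP [_ Hs]; apply/setP=> x; rewrite !inE.
apply/idP/idP; last by move/eqP->; rewrite connect0 Hs.
case/andP=> /connectP [p Hp Hl] _.
case: p Hp Hl => [|y p]; first by move=> _ ->.
rewrite (lastI y p) rcons_path => /andP [_ H] Hl.
by move/forallP: Hs => /(_ (last x (belast y p))); rewrite Hl last_rcons H.
Qed.

Definition dk (T : finType) (A : T -> {set T}) (k : T -> nat) (a b : T) : bool :=
  (A a \proper A b) || ((A a == A b) && (k a < k b)).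

Lemma dk_sub (T : finType) (A : T -> {set T}) k a b : dk A k a b -> A a \subset A b.
Proof. by case/orP=> [/properP []|/andP [/eqP -> _]]. Qed.

Lemma dk_dag (T : finType) (A : T -> {set T}) k N :
  (forall v, k v < N) -> is_dag (dk A k).
Proof.
move=> Hk.
pose phi v := #|A v| * N + k v.
have Hphi : forall a b, dk A k a b -> phi a < phi b.
  move=> a b /orP [/proper_card H|/andP [/eqP E H]]; rewrite /phi; last by rewrite E ltn_add2l.
  have := Hk a; have := Hk b.
  have : #|A a|.+1 * N <= #|A b| * N by apply: leq_mul.
  rewrite mulSn; lia.
have Hgen : forall x p, path (dk A k) x p -> p != [::] -> phi x < phi (last x p).
  move=> x p; elim: p x => [//|y p IH] x /= /andP [H1 H2] _.
  case: p IH H2 => [|z p] IH H2; first exact: Hphi.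
  apply: ltn_trans (Hphi _ _ H1) _; exact: IH.
move=> x p Hp Hl; apply/eqP; apply/negPn/negP=> Hne.
by have := Hgen x p Hp Hne; rewrite Hl ltnn.
Qed.

Lemma dk_adj (T : finType) (A : T -> {set T}) k x y : injective k ->
  adj (dk A k) x y = (x != y) && ((A x \subset A y) || (A y \subset A x)).
Proof.
move=> Hk; rewrite /adj /dk !properE eqEsubset [A y == A x]eqEsubset.
case: (boolP (A x \subset A y)) => S; case: (boolP (A y \subset A x)) => R /=;
  rewrite ?andbF ?orbF ?andbT //=.
- have Hne : (k x != k y) = (x != y).
    by apply/idP/idP; apply: contra => /eqP; [move->|move/Hk->].
  by rewrite -Hne neq_ltn.
- by case: eqP => // E; subst y; rewrite subxx in R.
- by case: eqP => // E; subst y; rewrite subxx in S.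
Qed.

Lemma dk_vstruct (T : finType) (A : T -> {set T}) k a b c : injective k ->
  vstruct (dk A k) a b c =
  [&& A a \proper A b, A c \proper A b, a != c &
      ~~ ((A a \subset A c) || (A c \subset A a))].
Proof.
move=> Hk; rewrite /vstruct dk_adj //.
apply/and4P/and4P; case=> H1 H2 H3 H4; split => //; rewrite ?H3 //= in H4 *.
- case/orP: H1 => // /andP [/eqP E _].
  by move: H4; rewrite E (dk_sub H2) orbT.
- case/orP: H2 => // /andP [/eqP E _].
  by move: H4; rewrite E (dk_sub H1).
- by rewrite /dk H1.
- by rewrite /dk H2.
Qed.

Lemma main_comb (T : finType) (u : rel T) (A : T -> {set T}) :
 (forall v w, u v w <-> v != w /\ exists s, s \in A v /\ s \in A w) ->
 (forall v s, s \in A v -> A s = [set s]) ->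
 (forall v, exists s, s \in A v) ->
 exists d, is_dag d /\ pdg_eq (init_CPDAG u) (CPDAG_of d).
Proof.
move=> H1 H2 H3.
have Hself : forall v s, s \in A v -> s \in A s by move=> v s /H2 ->; rewrite set11.
have Hor : forall a b, orient u a b <-> u a b /\ ~~ (A b \subset A a).
  move=> a b; split.
    case=> Hab [c [Hca Hbc Hac]]; split => //.
    case/H1: Hbc => _ [s [Hsb Hsc]].
    apply/negP=> /subsetP /(_ s Hsb) Hsa.
    move/negP: Hac; apply; apply/H1; split; first by rewrite eq_sym.
    by exists s.
  case=> Hab /subsetPn [s Hsb Hsa]; split => //.
  have As := H2 _ _ Hsb.
  exists s; split.
  - by apply/negP=> /eqP E; subst s; rewrite As set11 in Hsa.
  - apply/H1; split; last by exists s; split => //; rewrite As set11.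
    apply/negP=> /eqP E; subst s.
    case/H1: Hab => _ [x [Hxa Hxb]].
    by rewrite As inE in Hxb; rewrite (eqP Hxb) in Hxa; rewrite Hxa in Hsa.
  - apply/negP=> /H1 [_ [x [Hxa]]]; rewrite As inE => /eqP E; subst x.
    by rewrite Hxa in Hsa.
have Hsym : forall a b, u a b -> u b a.
  move=> a b /H1 [Hab [s [Hsa Hsb]]]; apply/H1; split; first by rewrite eq_sym.
  by exists s.
have Hdir : forall a b, (orient u a b /\ ~ orient u b a) <-> A a \proper A b.
  move=> a b; split.
    case=> /Hor [Hab HS] Hn; rewrite properE HS andbT.
    apply/negPn/negP=> HR; apply: Hn; apply/Hor; split => //; exact: Hsym.
  rewrite properE => /andP [HS HR]; have Hab : u a b.
    apply/H1; split.
      by apply/negP=> /eqP E; subst b; rewrite subxx in HR.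
    have [s Hs] := H3 a; exists s; split => //; exact: (subsetP HS).
  split; first by apply/Hor.
  by case/Hor=> _; rewrite HS.
pose k1 (v : T) : nat := enum_rank v.
pose k2 (v : T) : nat := #|T| - enum_rank v.
have Hk1 : forall v, k1 v < #|T|.+1 by move=> v; rewrite /k1; apply: ltnW; apply: ltn_ord.
have Hk2 : forall v, k2 v < #|T|.+1 by move=> v; rewrite /k2 ltnS leq_subr.
have Ik1 : injective k1 by move=> x y /val_inj /enum_rank_inj.
have Ik2 : injective k2.
  move=> x y; rewrite /k2 => E; apply: Ik1; rewrite /k1.
  have Hx : (enum_rank x : nat) < #|T| := ltn_ord _.
  have Hy : (enum_rank y : nat) < #|T| := ltn_ord _. lia.
have Hdag1 := @dk_dag _ A _ _ Hk1.
have Hdag2 := @dk_dag _ A _ _ Hk2.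
have Hme : markov_equiv (dk A k1) (dk A k2).
  by split => *; rewrite ?dk_adj ?dk_vstruct.
have Hcp : forall a b, cpdag_dir (dk A k1) a b <-> A a \proper A b.
  move=> a b; split.
    case=> Hd /(_ _ Hdag2 Hme).
    case/orP: Hd => // /andP [_ Hlt1] /orP [//|/andP [_ Hlt2]].
    move: Hlt1 Hlt2; rewrite /k1 /k2.
    have Hx : (enum_rank a : nat) < #|T| := ltn_ord _.
    have Hy : (enum_rank b : nat) < #|T| := ltn_ord _. lia.
  move=> Hp; split; first by rewrite /dk Hp.
  move=> d' _ [_ Hv].
  have /properP [HS [s Hsb Hsa]] := Hp.
  have As := H2 _ _ Hsb.
  have [x Hx] := H3 a.
  have : vstruct (dk A k1) a b s.
    rewrite dk_vstruct // Hp /=.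
    apply/and3P; split.
    - rewrite properE As sub1set Hsb /=; apply/negP=> /subsetP /(_ x (subsetP HS x Hx)).
      by rewrite inE => /eqP E; subst x; rewrite Hx in Hsa.
    - by apply/negP=> /eqP E; subst s; rewrite As set11 in Hsa.
    - rewrite As sub1set (negbTE Hsa) orbF; apply/negP=> /subsetP /(_ x Hx).
      by rewrite inE => /eqP E; subst x; rewrite Hx in Hsa.
  by rewrite Hv => /and4P [].
exists (dk A k1); split => //; split => a b /=.
  by rewrite Hcp Hdir.
split.
  case=> Hab Hn1 Hn2.
  have HS : A a \subset A b by apply/negPn/negP=> H; apply: Hn2; apply/Hor; split => //; exact: Hsym.
  have HR : A b \subset A a by apply/negPn/negP=> H; apply: Hn1; apply/Hor.
  case/H1: (Hab) => Hne _.
  split.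
  - by rewrite dk_adj // Hne HS.
  - by move/Hcp; rewrite properE HR andbF.
  - by move/Hcp; rewrite properE HS andbF.
case=> Had Hn1 Hn2; rewrite dk_adj // in Had; case/andP: Had => Hne HSR.
have HS : A a \subset A b.
  by case/orP: HSR => // H; apply/negPn/negP=> H'; apply: Hn2; apply/Hcp; rewrite properE H H'.
have HR : A b \subset A a by apply/negPn/negP=> H'; apply: Hn1; apply/Hcp; rewrite properE HS H'.
split.
- apply/H1; split => //; have [s Hs] := H3 a; exists s; split => //; exact: (subsetP HS).
- by case/Hor=> _; rewrite HR.
- by case/Hor=> _; rewrite HS.
Qed.

Theorem lemma5p3 (T : finType) (u : rel T) :
  UEC_representative u ->
  exists d : rel T, is_dag d /\ pdg_eq (init_CPDAG u) (CPDAG_of d).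
Proof.
case=> d0 [Hd Hu].
apply: (@main_comb T u (Aset d0)).
- move=> v w; rewrite Hu /udg; split.
    case=> Hne /(trek_iff _ _ Hd) [s [Hs1 Hs2 Hs3]]; split => //.
    by exists s; rewrite !inE Hs1 Hs2 Hs3.
  case=> Hne [s]; rewrite !inE => -[/andP [Hs1 Hs3] /andP [Hs2 _]]; split => //.
  by apply/(trek_iff _ _ Hd); exists s.
- by move=> v s; apply: Aset_src.
- move=> v; have [s [Hs1 Hs2]] := src_exists v Hd.
  by exists s; rewrite inE Hs1 Hs2.
Qed.
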